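(* Let $m$ be an odd positive integer, let $\tilde H\in\Omega_{2n}$ be invertible and Hermitian, and let $\tilde B\in\Omega_{2n}$ be $\tilde H$-selfadjoint with $\sigma(\tilde B)\subset(-\infty,0)$. Then there exists an $\tilde H$-selfadjoint $\tilde A\in\Omega_{2n}$ such that $\tilde A^m=\tilde B$.
   Context: $\Omega_{2n}=\{\begin{bmatrix}A_1&\bar A_2\\-A_2&\bar A_1\end{bmatrix}: A_1,A_2\in\mathbb{C}^{n\times n}\}\subset\mathbb{C}^{2n\times 2n}$. For an invertible Hermitian $H$, $A$ is $H$-selfadjoint if $HA=A^*H$. $\sigma(\cdot)$ denotes the spectrum. *)

(* Defs.v *)
From HB Require Import structures.
From mathcomp Require Import all_boot all_order all_algebra all_field.
Set Implicit Arguments. Unset Strict Implicit. Unset Printing Implicit Defensive.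
Import Order.TTheory GRing.Theory Num.Theory.
Local Open Scope ring_scope.

Definition conjmx (m n : nat) (A : 'M[algC]_(m, n)) : 'M[algC]_(m, n) :=
  map_mx (fun z => z^*) A.

Definition adjmx (m n : nat) (A : 'M[algC]_(m, n)) : 'M[algC]_(n, m) :=
  (conjmx A)^T.

Definition in_Omega (n : nat) (M : 'M[algC]_(n + n)) : Prop :=
  exists A1 A2 : 'M[algC]_n,
    M = block_mx A1 (conjmx A2) (- A2) (conjmx A1).

Definition is_hermitian_mx (k : nat) (H : 'M[algC]_k) : Prop := adjmx H = H.

Definition H_selfadjoint (k : nat) (H A : 'M[algC]_k) : Prop :=
  H *m A = adjmx A *m H.

Definition spec_neg_real (k : nat) (B : 'M[algC]_k) : Prop :=
  forall a : algC, eigenvalue B a -> (a \is Num.real) /\ a < 0.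

Fixpoint mxpow (k : nat) (A : 'M[algC]_k) (m : nat) : 'M[algC]_k :=
  match m with
  | 0 => 1%:M
  | m'.+1 => A *m mxpow A m'
  end.

(* Main.v *)
From Pilot Require Import Defs.
From HB Require Import structures.
From mathcomp Require Import all_boot all_order all_algebra all_field.
Import Order.TTheory GRing.Theory Num.Theory.
Local Open Scope ring_scope.

Local Notation cjm := Pilot.Defs.conjmx.
Definition psum {k} (B : 'M[algC]_k) (q : {poly algC}) : 'M[algC]_k :=
  \sum_(i < size q) q`_i *: B ^+ i.

Lemma horner_psum k (B : 'M[algC]_k.+1) q : horner_mx B q = psum B q.
Proof.
rewrite /horner_mx /horner_morph (@horner_coef_wide _ (size q)); last first.
  by rewrite map_polyE (leq_trans (size_Poly _)) // size_map.
by apply: eq_bigr => i _; rewrite coef_map /= -mul_scalar_mx mulmxE.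
Qed.

Section C.
Variables (a b c : nat).
Lemma cM (A : 'M[algC]_(a, b)) (B : 'M[algC]_(b, c)) :
  cjm (A *m B) = (cjm A) *m (cjm B).
Proof.
apply/matrixP=> i j; rewrite !mxE rmorph_sum; apply: eq_bigr => k _.
by rewrite !mxE rmorphM.
Qed.
Lemma cD (A B : 'M[algC]_(a, b)) : cjm (A + B) = cjm A + cjm B.
Proof. by apply/matrixP=> i j; rewrite !mxE rmorphD. Qed.
Lemma cN (A : 'M[algC]_(a, b)) : cjm (- A) = - cjm A.
Proof. by apply/matrixP=> i j; rewrite !mxE rmorphN. Qed.
Lemma cZ x (A : 'M[algC]_(a, b)) : cjm (x *: A) = x^* *: cjm A.
Proof. by apply/matrixP=> i j; rewrite !mxE rmorphM. Qed.
Lemma c0 : cjm (0 : 'M[algC]_(a, b)) = 0.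
Proof. by apply/matrixP=> i j; rewrite !mxE rmorph0. Qed.
Lemma cK (A : 'M[algC]_(a, b)) : cjm (cjm A) = A.
Proof. by apply/matrixP=> i j; rewrite !mxE conjCK. Qed.
End C.
Lemma c1 a : cjm (1%:M : 'M[algC]_a) = 1%:M.
Proof. by apply/matrixP=> i j; rewrite !mxE; case: (i == j); rewrite ?rmorph1 ?rmorph0. Qed.

Lemma omD n (X Y : 'M[algC]_(n + n)) : in_Omega X -> in_Omega Y -> in_Omega (X + Y).
Proof.
move=> [A1 [A2 ->]] [C1 [C2 ->]]; exists (A1 + C1), (A2 + C2).
by rewrite add_block_mx !cD opprD.
Qed.
Lemma omZ n x (X : 'M[algC]_(n + n)) : x^* = x -> in_Omega X -> in_Omega (x *: X).
Proof.
move=> hx [A1 [A2 ->]]; exists (x *: A1), (x *: A2).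
by rewrite scale_block_mx !cZ hx scalerN.
Qed.
Lemma om1 n : in_Omega (1 : 'M[algC]_(n + n)).
Proof. by exists 1%:M, 0; rewrite c0 c1 oppr0 -scalar_mx_block. Qed.
Lemma om0 n : in_Omega (0 : 'M[algC]_(n + n)).
Proof.
by exists 0, 0; rewrite c0 oppr0 block_mx0.
Qed.
Lemma omM n (X Y : 'M[algC]_(n + n)) : in_Omega X -> in_Omega Y -> in_Omega (X * Y).
Proof.
move=> [A1 [A2 ->]] [C1 [C2 ->]]; exists (A1 *m C1 - cjm A2 *m C2),
  (A2 *m C1 + cjm A1 *m C2).
rewrite -mulmxE mulmx_block; congr block_mx.
- by rewrite mulmxN.
- by rewrite cD !cM !cK addrC.
- by rewrite opprD mulNmx mulmxN.
- by rewrite cD cN !cM !cK mulNmx addrC.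
Qed.

Section A.
Variables (a b c : nat).
Lemma aM (A : 'M[algC]_(a, b)) (B : 'M[algC]_(b, c)) :
  adjmx (A *m B) = (adjmx B) *m (adjmx A).
Proof. by rewrite /adjmx cM trmx_mul. Qed.
Lemma aD (A B : 'M[algC]_(a, b)) : adjmx (A + B) = adjmx A + adjmx B.
Proof. by rewrite /adjmx cD linearD. Qed.
Lemma aZ x (A : 'M[algC]_(a, b)) : adjmx (x *: A) = x^* *: adjmx A.
Proof. by rewrite /adjmx cZ linearZ. Qed.
Lemma a0 : adjmx (0 : 'M[algC]_(a, b)) = 0.
Proof. by rewrite /adjmx c0 trmx0. Qed.
End A.
Lemma a1 a : adjmx (1%:M : 'M[algC]_a) = 1%:M.
Proof. by rewrite /adjmx c1 trmx1. Qed.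

Lemma mxpowE k (A : 'M[algC]_k) m : mxpow A m = A ^+ m.
Proof. by elim: m => [|m IH] //=; rewrite IH exprS mulmxE. Qed.

Lemma sa_pow k (H B : 'M[algC]_k) : H *m B = adjmx B *m H ->
  forall i, H *m B ^+ i = adjmx (B ^+ i) *m H.
Proof.
move=> hB; elim=> [|i IH]; first by rewrite expr0 mulmx1 a1 mul1mx.
rewrite exprS -mulmxE mulmxA hB -mulmxA IH mulmxA -aM.
by congr (adjmx _ *m H); rewrite !mulmxE -exprSr exprS.
Qed.

Lemma sa_psum k (H B : 'M[algC]_k) q : H *m B = adjmx B *m H ->
  map_poly Num.conj q = q -> H *m psum B q = adjmx (psum B q) *m H.
Proof.
move=> hB rq; apply: (big_ind (fun X => H *m X = adjmx X *m H)).
- by rewrite mulmx0 a0 mul0mx.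
- by move=> X Y hX hY; rewrite mulmxDr aD mulmxDl hX hY.
move=> i _; rewrite -scalemxAr sa_pow // aZ -scalemxAl.
by congr (_ *: _); rewrite -{1}rq coef_map.
Qed.

Lemma om_pow n (B : 'M[algC]_(n + n)) i : in_Omega B -> in_Omega (B ^+ i).
Proof.
move=> oB; elim: i => [|i IH]; first by rewrite expr0; exact: om1.
by rewrite exprS; apply: omM.
Qed.

Lemma om_psum n (B : 'M[algC]_(n + n)) q : in_Omega B ->
  map_poly Num.conj q = q -> in_Omega (psum B q).
Proof.
move=> oB rq; apply: (big_ind (@in_Omega n)).
- exact: om0.
- exact: omD.
move=> i _; apply: omZ; last exact: om_pow.
by have := congr1 (fun p : {poly algC} => p`_(val i)) rq; rewrite /= coef_map.
Qed.

Lemma root_poly m (rs : seq algC) : odd m ->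
  (forall z, z \in rs -> z \is Num.real /\ z < 0) ->
  exists q : {poly algC}, map_poly Num.conj q = q /\
    \prod_(z <- rs) ('X - z%:P) %| q ^+ m - 'X.
Proof.
move=> om; elim: rs => [|l rs IH] Hrs.
  by exists 0; rewrite rmorph0 big_nil dvd1p.
have [|q' [rq' dq']] := IH.
  by move=> z zr; apply: Hrs; rewrite inE zr orbT.
have [lr ln] := Hrs l (mem_head _ _).
set chi := \prod_(z <- rs) ('X - z%:P) in dq' *.
have rchi : map_poly Num.conj chi = chi.
  rewrite /chi rmorph_prod; apply: eq_big_seq => z zr.
  have [zre _] : z \is Num.real /\ z < 0 by apply: Hrs; rewrite inE zr orbT.
  by rewrite rmorphB /= map_polyX map_polyC /= conj_Creal.
have m0 : (0 < m)%N by move: om; case: (m).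
have hre (p : {poly algC}) x : map_poly Num.conj p = p -> x^* = x -> (p.[x])^* = p.[x].
  by move=> rp rx; rewrite -{2}rp -{2}rx horner_map.
have lc : l^* = l by rewrite conj_Creal.
set a := q'.[l].
have ac : a^* = a by rewrite hre.
have key c : (q' + c *: chi) ^+ m - 'X = (q' ^+ m - 'X) + chi * (c *: 
   \sum_(i < m) (q' + c *: chi) ^+ (m.-1 - i) * q' ^+ i).
  have h := subrXX (q' + c *: chi) q' m.
  have e : q' + c *: chi - q' = c *: chi by rewrite addrAC subrr add0r.
  rewrite e in h; rewrite -scalerAr scalerAl -h.
  by rewrite [RHS]addrC addrA subrK.
suff [c [rc hc]] : exists c : algC, c^* = c /\
     ('X - l%:P) * chi %| (q' + c *: chi) ^+ m - 'X.
  exists (q' + c *: chi); split; last by rewrite big_cons.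
  by rewrite rmorphD /= map_polyZ rq' rchi; congr (_ + _ *: _); exact: rc.
case: (boolP (root chi l)) => hl.
- set s := (q' ^+ m - 'X) %/ chi.
  have hs : s * chi = q' ^+ m - 'X := divpK dq'.
  have rs' : map_poly Num.conj s = s.
    by rewrite /s map_divp rmorphB rmorphXn /= rq' map_polyX rchi.
  have ha : a ^+ m = l.
    have := congr1 (horner^~ l) hs; rewrite hornerM (rootP hl) mulr0.
    rewrite hornerD hornerN horner_exp hornerX => /eqP; rewrite eq_sym subr_eq0.
    by move/eqP.
  have a0 : a != 0.
    apply/eqP=> a0; move: ha; rewrite a0 expr0n eqn0Ngt m0 /= => l0.
    by rewrite -l0 ltxx in ln.
  have d0 : m%:R * a ^+ m.-1 != 0.
    by rewrite mulf_neq0 ?expf_neq0 // pnatr_eq0 -lt0n.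
  exists (- s.[l] / (m%:R * a ^+ m.-1)); split.
    have sr : s.[l] \is Num.real by apply/CrealP; rewrite hre.
    have ar : a \is Num.real by apply/CrealP.
    by apply: conj_Creal; rewrite rpredM ?rpredN ?rpredV ?rpredM ?rpredX ?rpred_nat.
  rewrite key -hs [chi * _]mulrC -mulrDl dvdp_mul // dvdp_XsubCl; apply/rootP.
  rewrite hornerD hornerZ horner_sum.
  rewrite (eq_bigr (fun _ => a ^+ m.-1)); last first.
    move=> i _; rewrite hornerM !horner_exp hornerD hornerZ (rootP hl) mulr0 addr0 -exprD subnK //.
    by rewrite -ltnS prednK.
  by rewrite sumr_const card_ord -[a ^+ m.-1 *+ m]mulr_natr [_ * m%:R]mulrC divfK // subrr.
- set mu := - (m.-root (- l)).
  have mr : mu \is Num.real.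
    by rewrite rpredN ger0_real // rootC_ge0 // oppr_ge0 ltW.
  have hm : mu ^+ m = l.
    by rewrite /mu exprNn rootCK // -signr_odd om expr1 mulN1r opprK.
  have chr : chi.[l] \is Num.real by apply/CrealP; rewrite hre.
  have ar : a \is Num.real by apply/CrealP.
  have c0 : chi.[l] != 0 by exact: hl.
  exists ((mu - a) / chi.[l]); split.
    by apply: conj_Creal; rewrite rpredM ?rpredB ?rpredV.
  rewrite Gauss_dvdp; last by rewrite coprimep_sym coprimep_XsubC.
  apply/andP; split.
    rewrite dvdp_XsubCl; apply/rootP.
    rewrite hornerD hornerN hornerX horner_exp hornerD hornerZ divfK //.
    by rewrite -/a [a + _]addrC subrK hm subrr.
  by rewrite key dvdp_add ?dvdp_mulIl.
Qed.

Lemma mx_root k (B : 'M[algC]_k.+1) m : odd m -> spec_neg_real B ->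
  exists q : {poly algC}, map_poly Num.conj q = q /\ psum B q ^+ m = B.
Proof.
move=> om hB.
have [rs hrs] := closed_field_poly_normal (char_poly B).
rewrite (monicP (char_poly_monic B)) scale1r in hrs.
have [|q [rq dq]] := @root_poly m rs om.
  by move=> z zr; apply: hB; rewrite eigenvalue_root_char hrs root_prod_XsubC.
exists q; split => //.
rewrite -hrs in dq; have [t ht] := dvdpP _ _ dq.
rewrite -horner_psum -rmorphXn -(subrK 'X (q ^+ m)) ht rmorphD rmorphM /=.
by rewrite Cayley_Hamilton mulr0 add0r horner_mx_X.
Qed.

Theorem mainTheorem9 (n m : nat) (H B : 'M[algC]_(n + n)) :
  odd m ->
  in_Omega H -> H \in unitmx -> is_hermitian_mx H ->
  in_Omega B -> H_selfadjoint H B -> spec_neg_real B ->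
  exists A : 'M[algC]_(n + n),
    [/\ in_Omega A, H_selfadjoint H A & mxpow A m = B].
Proof.
case: n H B => [|n] H B om _ _ _ oB sB spB.
  by exists B; split => //; apply/matrixP => [[i hi]].
have [q [rq hq]] := @mx_root (n + n.+1) B m om spB.
exists (psum B q); split.
- exact: om_psum.
- exact: sa_psum.
- by rewrite mxpowE; exact: hq.
Qed.
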